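(* Let $X$ be a (real) Banach space with $\dim X>1$. Then $D(X)\ge\sqrt{2}$. More precisely, if $Y$ is any nonzero Banach space, then $d(Y\oplus_1\mathbb{R},\,Y\oplus_2\mathbb{R})\ge d(\ell_1^2,\ell_2^2)=\sqrt2$.
   Context: For isomorphic Banach spaces $X_1,X_2$, $d(X_1,X_2)=\inf\{\|T\|\,\|T^{-1}\|\}$ over all linear isomorphisms $T$ of $X_1$ onto $X_2$; $D(X)=\sup\{d(X_1,X_2): X_1,X_2 \text{ isomorphic to } X\}$. $Y\oplus_p\mathbb{R}$ denotes $Y\times\mathbb{R}$ with norm $\|(y,t)\|=(\|y\|^p+|t|^p)^{1/p}$; $\ell_p^2$ is $\mathbb{R}^2$ with the $\ell_p$ norm. *)

(* Defs.v *)
From HB Require Import structures.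
From mathcomp Require Import all_boot all_order all_algebra.
From mathcomp Require Import all_classical all_reals all_analysis.
From mathcomp Require Import ring lra.
Set Implicit Arguments. Unset Strict Implicit. Unset Printing Implicit Defensive.
Import Order.TTheory GRing.Theory Num.Theory.
Import numFieldNormedType.Exports.
Local Open Scope classical_set_scope.
Local Open Scope ring_scope.

Section Banach.
Variable R : realType.

Definition iso_pair (X Y : normedModType R) (T : X -> Y) (S : Y -> X) : Prop :=
  [/\ (forall (a : R) (x y : X), T (a *: x + y) = a *: T x + T y),
      cancel T S, cancel S T, continuous T & continuous S].

Definition isomorphic (X Y : normedModType R) : Prop :=
  exists (T : X -> Y) (S : Y -> X), iso_pair T S.

Definition opnorm (X Y : normedModType R) (T : X -> Y) : \bar R :=
  ereal_sup [set (`|T x|)%:E | x in [set x : X | `|x| <= 1]].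

Definition bmdist (X Y : normedModType R) : \bar R :=
  ereal_inf [set r | exists (T : X -> Y) (S : Y -> X),
                       iso_pair T S /\ r = (opnorm T * opnorm S)%E].

Definition BMdiam (X : normedModType R) : \bar R :=
  ereal_sup [set r | exists (X1 X2 : normedModType R),
                       [/\ isomorphic X1 X, isomorphic X2 X & r = bmdist X1 X2]].

Definition dim_gt1 (X : normedModType R) : Prop :=
  exists x y : X, forall a b : R, a *: x + b *: y = 0 -> a = 0 /\ b = 0.

End Banach.

(* Y (+)_1 R : Y x R with norm ||y|| + |t| *)
Definition oplus1 (R : realType) (Y : normedModType R) : Type := (Y * R^o)%type.
(* Y (+)_2 R : Y x R with norm (||y||^2 + |t|^2)^(1/2) *)
Definition oplus2 (R : realType) (Y : normedModType R) : Type := (Y * R^o)%type.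

Section Oplus.
Variables (R : realType) (Y : normedModType R).

HB.instance Definition _ := GRing.Lmodule.on (oplus1 Y).
HB.instance Definition _ := GRing.Lmodule.on (oplus2 Y).

Definition norm1 (z : oplus1 Y) : R := `|z.1| + `|z.2|.
Definition norm2 (z : oplus2 Y) : R := Num.sqrt (`|z.1| ^+ 2 + `|z.2| ^+ 2).

Lemma norm1D (x y : oplus1 Y) : norm1 (x + y) <= norm1 x + norm1 y.
Proof.
rewrite /norm1 /=; have h1 := ler_normD x.1 y.1.
have h2 := ler_normD (x.2 : R) y.2. lra.
Qed.

Lemma norm1Z (l : R) (x : oplus1 Y) : norm1 (l *: x) = `|l| * norm1 x.
Proof. by rewrite /norm1 /= normrZ normrM mulrDr. Qed.

Lemma norm1_eq0 (x : oplus1 Y) : norm1 x = 0 -> x = 0.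
Proof.
case: x => a b; rewrite /norm1 /= => h.
have ha : `|a| = 0 by apply/eqP; rewrite eq_le normr_ge0 andbT;
  have := normr_ge0 (b : R); lra.
have hb : `|b : R| = 0 by have := normr_ge0 a; lra.
by move/eqP: ha; rewrite normr_eq0 => /eqP ->; move/eqP: hb; rewrite normr_eq0 => /eqP ->.
Qed.

HB.instance Definition _ := Lmodule_isNormed.Build R (oplus1 Y) norm1D norm1Z norm1_eq0.

Lemma minkowski2 (a1 a2 b1 b2 : R) : 0 <= a1 -> 0 <= a2 -> 0 <= b1 -> 0 <= b2 ->
  Num.sqrt ((a1 + b1) ^+ 2 + (a2 + b2) ^+ 2) <=
  Num.sqrt (a1 ^+ 2 + a2 ^+ 2) + Num.sqrt (b1 ^+ 2 + b2 ^+ 2).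
Proof.
move=> ha1 ha2 hb1 hb2.
set A := a1 ^+ 2 + a2 ^+ 2; set B := b1 ^+ 2 + b2 ^+ 2.
have hA : 0 <= A by rewrite /A addr_ge0 // sqr_ge0.
have hB : 0 <= B by rewrite /B addr_ge0 // sqr_ge0.
have sA := sqrtr_ge0 A; have sB := sqrtr_ge0 B.
rewrite -(ger0_norm (addr_ge0 sA sB)) -sqrtr_sqr ler_sqrt; last first.
  by rewrite sqr_ge0.
have eA : Num.sqrt A ^+ 2 = A by rewrite sqr_sqrtr.
have eB : Num.sqrt B ^+ 2 = B by rewrite sqr_sqrtr.
have cs : a1 * b1 + a2 * b2 <= Num.sqrt A * Num.sqrt B.
  rewrite -sqrtrM // -(ger0_norm (addr_ge0 (mulr_ge0 ha1 hb1) (mulr_ge0 ha2 hb2))).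
  rewrite -sqrtr_sqr ler_sqrt; last by rewrite mulr_ge0.
  have := sqr_ge0 (a1 * b2 - a2 * b1); rewrite /A /B; nra.
rewrite /A /B in eA eB *; nra.
Qed.

Lemma norm2D (x y : oplus2 Y) : norm2 (x + y) <= norm2 x + norm2 y.
Proof.
rewrite /norm2 /=.
apply: le_trans (minkowski2 (normr_ge0 x.1) (normr_ge0 (x.2 : R))
                            (normr_ge0 y.1) (normr_ge0 (y.2 : R))).
rewrite ler_sqrt; last by rewrite addr_ge0 // sqr_ge0.
apply: lerD; rewrite lerXn2r ?nnegrE ?addr_ge0 ?normr_ge0 //; exact: ler_normD.
Qed.

Lemma norm2Z (l : R) (x : oplus2 Y) : norm2 (l *: x) = `|l| * norm2 x.
Proof.
rewrite /norm2 /= normrZ normrM !exprMn -mulrDr sqrtrM ?sqr_ge0 //.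
by rewrite sqrtr_sqr normr_id.
Qed.

Lemma norm2_eq0 (x : oplus2 Y) : norm2 x = 0 -> x = 0.
Proof.
case: x => a b; rewrite /norm2 /= => /eqP; rewrite sqrtr_eq0 => h.
have h1 := sqr_ge0 `|a|; have h2 := sqr_ge0 `|b : R|.
have ha : `|a| ^+ 2 = 0 by apply/eqP; rewrite eq_le h1 andbT; lra.
have hb : `|b : R| ^+ 2 = 0 by lra.
move/eqP: ha; rewrite sqrf_eq0 normr_eq0 => /eqP ->.
by move/eqP: hb; rewrite sqrf_eq0 normr_eq0 => /eqP ->.
Qed.

HB.instance Definition _ := Lmodule_isNormed.Build R (oplus2 Y) norm2D norm2Z norm2_eq0.

End Oplus.

Definition ell1_2 (R : realType) : normedModType R := oplus1 (R^o : normedModType R).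
Definition ell2_2 (R : realType) : normedModType R := oplus2 (R^o : normedModType R).

(* Main.v *)
Require Import Defs.
From HB Require Import structures.
From mathcomp Require Import all_boot all_order all_algebra.
From mathcomp Require Import all_classical all_reals all_analysis.
From mathcomp Require Import ring lra.
Set Implicit Arguments. Unset Strict Implicit. Unset Printing Implicit Defensive.
Import Order.TTheory GRing.Theory Num.Theory.
Import numFieldNormedType.Exports.
Local Open Scope classical_set_scope.
Local Open Scope ring_scope.


Section Gen.
Variable R : realType.

Definition linp (U V : lmodType R) (f : U -> V) :=
  forall a x y, f (a *: x + y) = a *: f x + f y.
Definition linf (U : lmodType R) (f : U -> R) :=
  forall a x y, f (a *: x + y) = a * f x + f y.

Section LinFacts.
Variables (U V : lmodType R) (f : U -> V) (H : linp f).
Lemma lin0 : f 0 = 0.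
Proof.
have := H 1 0 0; rewrite !scale1r addr0 => h.
by apply: (@addrI _ (f 0)); rewrite addr0 -h.
Qed.
Lemma linD x y : f (x + y) = f x + f y.
Proof. by have := H 1 x y; rewrite !scale1r. Qed.
Lemma linZ a x : f (a *: x) = a *: f x.
Proof. by have := H a x 0; rewrite !addr0 lin0 addr0. Qed.
Lemma linN x : f (- x) = - f x.
Proof. by rewrite -scaleN1r linZ scaleN1r. Qed.
Lemma linB x y : f (x - y) = f x - f y.
Proof. by rewrite linD linN. Qed.
End LinFacts.

Section LinfFacts.
Variables (U : lmodType R) (f : U -> R) (H : linf f).
Lemma linf0 : f 0 = 0.
Proof.
have := H 1 0 0; rewrite !scale1r addr0 mul1r => h.
by apply: (@addrI _ (f 0)); rewrite addr0 -h.
Qed.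
Lemma linfD x y : f (x + y) = f x + f y.
Proof. by have := H 1 x y; rewrite !scale1r mul1r. Qed.
Lemma linfZ a x : f (a *: x) = a * f x.
Proof. by have := H a x 0; rewrite !addr0 linf0 addr0. Qed.
Lemma linfN x : f (- x) = - f x.
Proof. by rewrite -scaleN1r linfZ mulN1r. Qed.
Lemma linfB x y : f (x - y) = f x - f y.
Proof. by rewrite linfD linfN. Qed.
End LinfFacts.

Lemma iso_lin (X Y : normedModType R) (T : X -> Y) (S : Y -> X) :
  iso_pair T S -> linp T /\ linp S.
Proof.
case=> TL TS ST _ _; split => // a x y.
by rewrite -{1}(ST x) -{1}(ST y) -TL TS.
Qed.

Lemma opnorm_ge (X Y : normedModType R) (T : X -> Y) x :
  `|x| <= 1 -> ((`|T x|)%:E <= opnorm T)%E.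
Proof. by move=> hx; apply: ereal_sup_ubound; exists x. Qed.

Lemma opnorm_le (X Y : normedModType R) (T : X -> Y) (c : R) :
  (forall x, `|x| <= 1 -> `|T x| <= c) -> (opnorm T <= c%:E)%E.
Proof.
move=> h; apply: ge_ereal_sup => _ [x hx <-]; rewrite lee_fin; exact: h.
Qed.

Lemma opnorm_ge0 (X Y : normedModType R) (T : X -> Y) : (0 <= opnorm T)%E.
Proof.
apply: le_trans (opnorm_ge T (x := 0) _); last by rewrite normr0.
by rewrite lee_fin.
Qed.

Lemma lin_cont (X Y : normedModType R) (T : X -> Y) (C : R) :
  linp T -> 0 < C -> (forall x, `|T x| <= C * `|x|) -> continuous T.
Proof.
move=> TL C0 HC x; apply/cvgrPdist_lt => e e0.
have eC : 0 < e / C by rewrite divr_gt0.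
near=> z; rewrite -(linB TL).
apply: le_lt_trans (HC _) _; rewrite -ltr_pdivlMl // mulrC.
by near: z; apply: cvgr_dist_lt.
Unshelve. all: by end_near. Qed.

End Gen.


Section Core.
Variable R : realType.

Lemma core (X1 X2 : normedModType R) (T : X1 -> X2) (S : X2 -> X1)
  (p1 : X1 -> X1) (g1 : X1 -> R) (e1 : X1)
  (p2 : X2 -> X2) (g2 : X2 -> R) (e2 : X2) (u : X1) :
  iso_pair T S -> linp p1 -> linf g1 -> linp p2 -> linf g2 ->
  (forall x, `|x| = `|p1 x| + `|g1 x|) ->
  (forall z, `|z| ^+ 2 = `|p2 z| ^+ 2 + g2 z ^+ 2) ->
  p1 e1 = 0 -> g1 e1 = 1 ->
  (forall z, p2 (p2 z) = p2 z) -> (forall z, g2 (p2 z) = 0) ->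
  p2 e2 = 0 -> g2 e2 = 1 ->
  u != 0 -> g1 u = 0 ->
  ((Num.sqrt 2)%:E <= opnorm T * opnorm S)%E.
Proof.
move=> iso p1L g1L p2L g2L N1 N2 p1e g1e p2p g2p p2e g2e u0 g1u.
have [TL SL] := iso_lin iso.
case: iso => _ TS ST _ _.
set a := p2 (T e1).
have [v [v0 g1v dep]] : exists v, [/\ v != 0, g1 v = 0 &
    (a = 0 \/ exists l, p2 (T v) = l *: a)].
  have [a0|an0] := eqVneq a 0; first by exists u; split => //; left.
  set r1 := g1 (S a); set r2 := g1 (S e2).
  have [r10|r1n0] := eqVneq r1 0.
    exists (S a); split => //.
      apply/eqP => Sa0; move/eqP: an0; apply; rewrite -(ST a) Sa0 (lin0 TL) //.
    by right; exists 1; rewrite ST p2p scale1r.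
  exists (S (r2 *: a - r1 *: e2)); split.
  - apply/eqP => h.
    have : T (S (r2 *: a - r1 *: e2)) = 0 by rewrite h (lin0 TL).
    rewrite ST => /(congr1 g2); rewrite (linfB g2L) !(linfZ g2L) g2p g2e (linf0 g2L).
    by move=> h2; move/eqP: r1n0; apply; lra.
  - by rewrite (linB SL) !(linZ SL) (linfB g1L) !(linfZ g1L) -/r1 -/r2 mulrC subrr.
  - by right; exists r2; rewrite ST (linB p2L) !(linZ p2L) p2p p2e scaler0 subr0.
have nv : 0 < `|v| by rewrite normr_gt0.
set w := `|v|^-1 *: v.
have nw : `|w| = 1 by rewrite /w normrZ normrV ?unitfE ?normr_eq0 // normr_id mulVf // gt_eqF.
have g1w : g1 w = 0 by rewrite /w (linfZ g1L) g1v mulr0.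
have depw : a = 0 \/ exists m, p2 (T w) = m *: a.
  case: dep => [->|[l hl]]; [by left|right].
  by exists (`|v|^-1 * l); rewrite /w (linZ TL) (linZ p2L) hl scalerA.
set P := T e1; set Q := T w.
have para : `|P + Q| ^+ 2 + `|P - Q| ^+ 2 = 2 * `|P| ^+ 2 + 2 * `|Q| ^+ 2.
  rewrite (N2 (P+Q)) (N2 (P-Q)) (N2 P) (N2 Q) (linD p2L) (linB p2L) (linfD g2L) (linfB g2L) -/a.
  case: depw => [a0|[m hm]].
    rewrite a0 add0r sub0r normrN normr0; lra.
  have E1 : a + m *: a = (1 + m) *: a by rewrite scalerDl scale1r.
  have E2 : a - m *: a = (1 - m) *: a by rewrite scalerBl scale1r.
  rewrite hm E1 E2 !normrZ !exprMn !real_normK ?num_real //; lra.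
have ne1 : `|e1| = 1 by rewrite N1 p1e g1e normr0 normr1 add0r.
have pw : `|p1 w| = 1.
  by have := N1 w; rewrite nw g1w normr0 addr0 => ->.
have nP : forall s : R, `|s| = 1 -> `|e1 + s *: w| = 2.
  move=> s hs; rewrite N1 (linD p1L) (linZ p1L) p1e add0r normrZ hs mul1r.
  rewrite (linfD g1L) (linfZ g1L) g1e g1w mulr0 addr0 normr1 pw; lra.
have [s [hs hc]] : exists s : R, `|s| = 1 /\ 2 * `|P + s *: Q| ^+ 2 <= 2 * `|P| ^+ 2 + 2 * `|Q| ^+ 2.
  case: (leP `|P + Q| `|P - Q|) => h.
    exists 1; split; first by rewrite normr1.
    rewrite scale1r -para; have := normr_ge0 (P + Q); nra.
  exists (-1); split; first by rewrite normrN normr1.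
  rewrite scaleN1r -para; have := normr_ge0 (P - Q); nra.
set c := `|P + s *: Q|.
have hPQ : P + s *: Q = T (e1 + s *: w) by rewrite (linD TL) (linZ TL).
have c0 : 0 < c.
  rewrite normr_gt0; apply/eqP => h0; have := nP s hs.
  rewrite -(TS (e1 + s *: w)) -hPQ h0 (lin0 SL) normr0; lra.
have hB : ((c^-1 * 2)%:E <= opnorm S)%E.
  have -> : c^-1 * 2 = `|S (c^-1 *: (P + s *: Q))|.
    by rewrite (linZ SL) hPQ TS normrZ (nP s hs) ger0_norm // invr_ge0 ltW.
  apply: opnorm_ge; rewrite normrZ ger0_norm; last by rewrite invr_ge0 ltW.
  by rewrite mulVf // gt_eqF.
have hAP : ((`|P|)%:E <= opnorm T)%E by apply: opnorm_ge; rewrite ne1.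
have hAQ : ((`|Q|)%:E <= opnorm T)%E by apply: opnorm_ge; rewrite nw.
move: (opnorm T) hAP hAQ => [al| |] hAP hAQ; last first.
- by have := lt_le_trans (ltNyr _) hAP.
- rewrite gt0_mulye ?leey //; apply: (lt_le_trans _ hB); rewrite lte_fin mulr_gt0 // invr_gt0.
  by [].
rewrite lee_fin in hAP hAQ.
have al0 : 0 <= al by apply: le_trans hAP.
have al0' : (0 <= al%:E)%E by rewrite lee_fin.
apply: le_trans (lee_wpmul2l al0' hB).
rewrite -EFinM lee_fin.
have sq2 : Num.sqrt 2 ^+ 2 = 2 :> R by rewrite sqr_sqrtr.
have sq0 : 0 <= Num.sqrt 2 :> R by apply: sqrtr_ge0.
have hc2 : c ^+ 2 <= 2 * al ^+ 2.
  have hp := ler_pM (normr_ge0 P) (normr_ge0 P) hAP hAP.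
  have hq := ler_pM (normr_ge0 Q) (normr_ge0 Q) hAQ hAQ.
  rewrite !expr2 in hc *; nra.
have h3 : Num.sqrt 2 * c <= 2 * al.
  rewrite -(ler_pXn2r (_ : (0 < 2)%N)) ?nnegrE; last 2 first.
  - exact: mulr_ge0 sq0 (ltW c0).
  - exact: mulr_ge0.
  rewrite !exprMn sq2 [(2:R) ^+ 2]expr2; lra.
  by [].
have -> : al * (c^-1 * 2) = (2 * al) / c by ring.
by rewrite ler_pdivlMr.
Qed.
End Core.


Section Oplus.
Variable R : realType.
Variable Y : normedModType R.

Lemma norm1E (z : oplus1 Y) : `|z| = `|z.1| + `|z.2 : R|.
Proof. by []. Qed.
Lemma norm2E (z : oplus2 Y) : `|z| = Num.sqrt (`|z.1| ^+ 2 + `|z.2 : R| ^+ 2).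
Proof. by []. Qed.

Definition pr1 (z : oplus1 Y) : oplus1 Y := (z.1, 0).
Definition pr2 (z : oplus2 Y) : oplus2 Y := (z.1, 0).
Definition gg1 (z : oplus1 Y) : R := z.2.
Definition gg2 (z : oplus2 Y) : R := z.2.

Lemma oplus_bound (T : oplus1 Y -> oplus2 Y) (S : oplus2 Y -> oplus1 Y) (y0 : Y) :
  y0 != 0 -> iso_pair T S -> ((Num.sqrt 2)%:E <= opnorm T * opnorm S)%E.
Proof.
move=> y00 iso.
apply: (@core R _ _ T S pr1 gg1 ((0, 1) : oplus1 Y) pr2 gg2 ((0,1) : oplus2 Y) ((y0, 0) : oplus1 Y) iso).
- move=> a [x1 x2] [y1 y2]; rewrite /pr1 /=; change ((a *: x1 + y1, 0) = (a *: x1 + y1, a *: (0:R^o) + 0) :> oplus1 Y); by rewrite scaler0 addr0.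
- by move=> a [x1 x2] [y1 y2].
- move=> a [x1 x2] [y1 y2]; rewrite /pr2 /=; change ((a *: x1 + y1, 0) = (a *: x1 + y1, a *: (0:R^o) + 0) :> oplus2 Y); by rewrite scaler0 addr0.
- by move=> a [x1 x2] [y1 y2].
- by move=> [x1 x2]; rewrite !norm1E /= normr0 addr0.
- move=> [x1 x2]; rewrite !norm2E /= normr0 expr0n /= addr0 !sqr_sqrtr ?addr_ge0 ?sqr_ge0 //.
  by rewrite real_normK ?num_real.
- by [].
- by [].
- by [].
- by [].
- by [].
- by [].
- apply/eqP => h; move/eqP: y00; apply; by case: h.
- by [].
Qed.

End Oplus.


Section Oplus2.
Variable R : realType.

Lemma sqrt_le_sum (a b : R) : 0 <= a -> 0 <= b -> Num.sqrt (a ^+ 2 + b ^+ 2) <= a + b.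
Proof.
move=> ha hb; rewrite -(ger0_norm (addr_ge0 ha hb)) -sqrtr_sqr ler_sqrt; last by rewrite sqr_ge0.
nra.
Qed.

Lemma sum_le_sqrt (a b : R) : 0 <= a -> 0 <= b ->
  a + b <= Num.sqrt 2 * Num.sqrt (a ^+ 2 + b ^+ 2).
Proof.
move=> ha hb; rewrite -sqrtrM // -(ger0_norm (addr_ge0 ha hb)) -sqrtr_sqr ler_sqrt; last first.
  by rewrite mulr_ge0 // addr_ge0 // sqr_ge0.
have := sqr_ge0 (a - b); nra.
Qed.

Variable Y : normedModType R.
Definition id12 (z : oplus1 Y) : oplus2 Y := z.
Definition id21 (z : oplus2 Y) : oplus1 Y := z.

Lemma id12_le z : `|id12 z| <= `|z|.
Proof. by rewrite norm1E norm2E; apply: sqrt_le_sum. Qed.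
Lemma id21_le z : `|id21 z| <= Num.sqrt 2 * `|z|.
Proof. by rewrite norm1E norm2E; apply: sum_le_sqrt. Qed.

Lemma iso12 : iso_pair id12 id21.
Proof.
have l12 : linp id12 by [].
have l21 : linp id21 by [].
split => //.
- by apply: (lin_cont l12 ltr01) => z; rewrite mul1r id12_le.
- have s0 : 0 < Num.sqrt (2:R) by rewrite sqrtr_gt0.
  by apply: (lin_cont l21 s0) => z; rewrite ?id21_le.
Qed.

Lemma oplus_upper : (bmdist (oplus1 Y) (oplus2 Y) <= (Num.sqrt 2)%:E)%E.
Proof.
apply: ge_ereal_inf; exists (opnorm id12 * opnorm id21)%E.
  by exists id12, id21; split => //; exact: iso12.
rewrite -[X in (_ <= X)%E]mul1e.
apply: lee_pmul; rewrite ?opnorm_ge0 //; apply: opnorm_le.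
- by move=> z hz; apply: le_trans (id12_le z) hz.
- move=> z hz; apply: le_trans (id21_le z) _.
  by rewrite ler_piMr ?sqrtr_ge0.
Qed.

Lemma oplus_lower (y0 : Y) : y0 != 0 ->
  ((Num.sqrt 2)%:E <= bmdist (oplus1 Y) (oplus2 Y))%E.
Proof.
move=> y00; apply/ereal_infP => _ [T [S [iso ->]]]; exact: oplus_bound y00 iso.
Qed.
End Oplus2.

Lemma ell_eq (R : realType) : bmdist (ell1_2 R) (ell2_2 R) = (Num.sqrt 2)%:E.
Proof.
apply/eqP; rewrite eq_le; apply/andP; split.
  exact: (oplus_upper (R^o : normedModType R)).
exact: (oplus_lower (Y := (R^o : normedModType R)) (oner_neq0 R)).
Qed.


Section HBL.
Variable R : realType.
Variables (X : normedModType R) (x0 : X).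

Definition good (G : set (X * R)) :=
  (forall x a y b l, G (x, a) -> G (y, b) -> G (l *: x + y, l * a + b)) /\
  (forall x a, G (x, a) -> a <= `|x|).
Definition G0 : set (X * R) := [set z | exists t : R, z = (t *: x0, t * `|x0|)].
Definition PP (G : set (X * R)) := good G /\ (forall z, G z -> G0 `<=` G).

Lemma PP_chain (F : set (set (X * R))) : F `<=` PP -> total_on F subset ->
  PP (\bigcup_(M in F) M).
Proof.
move=> FP tot; split; first split.
- move=> x a y b l [M FM Mxa] [N FN Nyb].
  case: (tot M N FM FN) => MN.
    by exists N => //; apply: (FP N FN).1.1 (MN _ Mxa) Nyb.
  by exists M => //; apply: (FP M FM).1.1 Mxa (MN _ Nyb).
- by move=> x a [M FM Mxa]; exact: (FP M FM).1.2 _ _ Mxa.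
- move=> z [M FM Mz] w G0w; exists M => //; exact: (FP M FM).2 z Mz w G0w.
Qed.

Lemma G0good : PP G0.
Proof.
split; first split.
- move=> x a y b l [t [-> ->]] [s [-> ->]]; exists (l * t + s).
  by rewrite scalerDl scalerA; congr (_, _); ring.
- move=> x a [t [-> ->]]; rewrite normrZ; apply: ler_wpM2r => //; exact: ler_norm.
- by move=> z _ w.
Qed.

Lemma exists_fun : exists f : X -> R,
  [/\ linf f, (forall x, `|f x| <= `|x|) & f x0 = `|x0|].
Proof.
have [A [[[lA dA] hA] maxA]] := Zorn_bigcup PP_chain.
have AG0 : G0 `<=` A.
  have [[z Az]|nA] := pselect (exists z, A z); first exact: hA z Az.
  exfalso; apply: (maxA G0) G0good; split.
    by move=> z Az; exfalso; apply: nA; exists z.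
  move=> /(_ (1 *: x0, 1 * `|x0|)) h; apply: nA; eexists; apply: h.
  by exists 1.
have A00 : A (0, 0).
  have := AG0 (0 *: x0, 0 * `|x0|) (ex_intro _ 0 erefl); by rewrite scale0r mul0r.
have uniq : forall x a b, A (x, a) -> A (x, b) -> a = b.
  have h1 : forall x a b, A (x, a) -> A (x, b) -> b <= a.
    move=> x a b Ha Hb; have := dA _ _ (lA _ _ _ _ (-1) Ha Hb).
    rewrite scaleN1r addNr normr0 mulN1r; lra.
  move=> x a b Ha Hb; apply/eqP; rewrite eq_le (h1 x a b Ha Hb) (h1 x b a Hb Ha) //.
have tot : forall v, exists a, A (v, a).
  move=> v; apply/not_existsP => nv.
  pose E := [set r : R | exists d a, A (d, a) /\ r = a - `|d - v|].
  have E0 : E !=set0 by exists (0 - `|0 - v|); exists 0, 0.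
  have Eub : forall d a, A (d, a) -> ubound E (`|d + v| - a).
    move=> d a Ha _ [d' [a' [Ha' ->]]].
    have := dA _ _ (lA _ _ _ _ 1 Ha' Ha); rewrite scale1r mul1r => h.
    have : `|d' + d| <= `|d' - v| + `|d + v|.
      by apply: le_trans (ler_normD _ _); rewrite addrACA addNr addr0.
    lra.
  pose c := sup E.
  have hc1 : forall d a, A (d, a) -> a - `|d - v| <= c.
    move=> d a Ha; apply: ub_le_sup; first by exists (`|0 + v| - 0); apply: Eub.
    by exists d, a.
  have hc2 : forall d a, A (d, a) -> c <= `|d + v| - a.
    by move=> d a Ha; apply: ge_sup => //; apply: Eub.
  pose A' := [set z | exists x a t, A (x, a) /\ z = (x + t *: v, a + t * c)].
  have AA' : A `<=` A'.
    by move=> [x a] Ha; exists x, a, 0; split => //; rewrite scale0r mul0r !addr0.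
  apply: (maxA A'); first split => //.
    move=> /(_ (v, c)) h; apply: (nv c); apply: h.
    by exists 0, 0, 1; rewrite scale1r mul1r !add0r.
  split; first split.
  - move=> x a y b l [x1 [a1 [t1 [H1 [-> ->]]]]] [y1 [b1 [s1 [H2 [-> ->]]]]].
    exists (l *: x1 + y1), (l * a1 + b1), (l * t1 + s1); split; first exact: lA.
    congr (_, _); last by ring.
    by rewrite scalerDr scalerA scalerDl addrACA.
  - move=> x a [x1 [a1 [t [H1 [-> ->]]]]].
    have [t0|tn0] := eqVneq t 0.
      by rewrite t0 scale0r mul0r !addr0; exact: dA.
    have hti : t * t^-1 = 1 by rewrite mulfV.
    have Nt : `|x1 + t *: v| = `|t| * `|t^-1 *: x1 + v|.
      by rewrite -normrZ scalerDr scalerA hti scale1r.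
    rewrite Nt; set N := `|t^-1 *: x1 + v|.
    have [tp|tn] := ltrP 0 t.
      have := hc2 _ _ (lA _ _ _ _ t^-1 H1 A00); rewrite !addr0 -/N => h.
      rewrite gtr0_norm //.
      have h2 := ler_wpM2l (ltW tp) h.
      have e3 : t * (t^-1 * a1) = a1 by rewrite mulrA hti mul1r.
      rewrite mulrBr e3 in h2; lra.
    have tn' : t < 0 by rewrite lt_neqAle tn0 tn.
    have := hc1 _ _ (lA _ _ _ _ (- t^-1) H1 A00).
    rewrite !addr0 scaleNr -opprD normrN -/N => h.
    rewrite ltr0_norm //.
    have tp' : 0 < - t by rewrite oppr_gt0.
    have h2 := ler_wpM2l (ltW tp') h.
    have e3 : - t * (- t^-1 * a1) = a1 by rewrite mulrA mulrNN hti mul1r.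
    rewrite mulrBr e3 in h2; lra.
  - move=> z _; exact: subset_trans AA'.
pose f v := projT1 (cid (tot v)).
have Af : forall v, A (v, f v) by move=> v; rewrite /f; case: cid.
have lf : linf f.
  move=> l x y; apply: (uniq (l *: x + y)); first exact: Af.
  exact: lA (Af x) (Af y).
exists f; split => //.
- move=> x; rewrite ler_norml; apply/andP; split; last exact: dA (Af x).
  have := dA _ _ (Af (- x)); rewrite (linfN lf) normrN; lra.
- apply: (uniq x0); first exact: Af.
  by have := AG0 (1 *: x0, 1 * `|x0|) (ex_intro _ 1 erefl); rewrite scale1r mul1r.
Qed.
End HBL.


Definition cp1 (R : realType) (X : normedModType R) (f : X -> R) (e : X)
  (fl : linf f) (fe : f e = 1) : Type := X.
Definition cp2 (R : realType) (X : normedModType R) (f : X -> R) (e : X)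
  (fl : linf f) (fe : f e = 1) : Type := X.

Section Copy.
Variables (R : realType) (X : normedModType R) (f : X -> R) (e : X)
  (fl : linf f) (fe : f e = 1).

Definition PX (x : X) : X := x - f x *: e.

Lemma PX_lin : linp PX.
Proof.
move=> a x y; rewrite /PX fl scalerDl -scalerA scalerBr.
by rewrite opprD addrACA.
Qed.
Lemma fPX x : f (PX x) = 0.
Proof. by rewrite /PX (linfB fl) (linfZ fl) fe mulr1 subrr. Qed.
Lemma PPX x : PX (PX x) = PX x.
Proof. by rewrite {1}/PX fPX scale0r subr0. Qed.
Lemma PXe : PX e = 0.
Proof. by rewrite /PX fe scale1r subrr. Qed.

HB.instance Definition _ := GRing.Lmodule.on (cp1 fl fe).
HB.instance Definition _ := GRing.Lmodule.on (cp2 fl fe).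

Definition N1 (z : cp1 fl fe) : R := `|PX z| + `|f z|.
Definition N2 (z : cp2 fl fe) : R := Num.sqrt (`|PX z| ^+ 2 + `|f z| ^+ 2).

Lemma N1D (x y : cp1 fl fe) : N1 (x + y) <= N1 x + N1 y.
Proof.
rewrite /N1 (linD PX_lin) (linfD fl).
have h1 := ler_normD (PX x) (PX y); have h2 := ler_normD (f x) (f y); lra.
Qed.
Lemma N1Z (l : R) (x : cp1 fl fe) : N1 (l *: x) = `|l| * N1 x.
Proof. by rewrite /N1 (linZ PX_lin) (linfZ fl) normrZ normrM mulrDr. Qed.
Lemma N1_eq0 (x : cp1 fl fe) : N1 x = 0 -> x = 0.
Proof.
rewrite /N1 => h.
have hf : `|f x| = 0 by have := normr_ge0 (PX x); have := normr_ge0 (f x); lra.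
have hp : `|PX x| = 0 by have := normr_ge0 (PX x); have := normr_ge0 (f x); lra.
move/eqP: hf; rewrite normr_eq0 => /eqP hf.
by move/eqP: hp; rewrite normr_eq0 /PX hf scale0r subr0 => /eqP.
Qed.
HB.instance Definition _ := Lmodule_isNormed.Build R (cp1 fl fe) N1D N1Z N1_eq0.

Lemma N2D (x y : cp2 fl fe) : N2 (x + y) <= N2 x + N2 y.
Proof.
rewrite /N2.
apply: le_trans (minkowski2 (normr_ge0 (PX x)) (normr_ge0 (f x))
                            (normr_ge0 (PX y)) (normr_ge0 (f y))).
rewrite ler_sqrt; last by rewrite addr_ge0 // sqr_ge0.
apply: lerD; rewrite lerXn2r ?nnegrE ?addr_ge0 ?normr_ge0 //.
  by rewrite (linD PX_lin) ler_normD.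
by rewrite (linfD fl) ler_normD.
Qed.
Lemma N2Z (l : R) (x : cp2 fl fe) : N2 (l *: x) = `|l| * N2 x.
Proof.
rewrite /N2 (linZ PX_lin) (linfZ fl) normrZ normrM !exprMn -mulrDr sqrtrM ?sqr_ge0 //.
by rewrite sqrtr_sqr normr_id.
Qed.
Lemma N2_eq0 (x : cp2 fl fe) : N2 x = 0 -> x = 0.
Proof.
rewrite /N2 => /eqP; rewrite sqrtr_eq0 => h.
have h1 := sqr_ge0 `|PX x|; have h2 := sqr_ge0 `|f x|.
have ha : `|PX x| ^+ 2 = 0 by lra.
have hb : `|f x| ^+ 2 = 0 by lra.
move/eqP: hb; rewrite sqrf_eq0 normr_eq0 => /eqP hf.
by move/eqP: ha; rewrite sqrf_eq0 normr_eq0 /PX hf scale0r subr0 => /eqP.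
Qed.
HB.instance Definition _ := Lmodule_isNormed.Build R (cp2 fl fe) N2D N2Z N2_eq0.

Lemma cp1E (z : cp1 fl fe) : `|z| = `|PX z| + `|f z|. Proof. by []. Qed.
Lemma cp2E (z : cp2 fl fe) : `|z| = Num.sqrt (`|PX z| ^+ 2 + `|f z| ^+ 2). Proof. by []. Qed.

Lemma cp_bound (u : X) : u != 0 -> f u = 0 ->
  ((Num.sqrt 2)%:E <= bmdist (cp1 fl fe) (cp2 fl fe))%E.
Proof.
move=> u0 fu; apply/ereal_infP => _ [T [S [iso ->]]].
apply: (@core R _ _ T S PX f e PX f e u iso) => //.
- exact: PX_lin.
- exact: PX_lin.
- by move=> x; rewrite !cp1E PPX fPX normr0 addr0.
- move=> z; rewrite !cp2E PPX fPX normr0 expr0n /= addr0.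
  by rewrite !sqr_sqrtr ?addr_ge0 ?sqr_ge0 // real_normK ?num_real.
- exact: PXe.
- exact: PPX.
- exact: fPX.
- exact: PXe.
Qed.

Hypotheses (fb : forall x, `|f x| <= `|x|) (ne : `|e| = 1).

Lemma PX_le x : `|PX x| <= 2 * `|x|.
Proof.
rewrite /PX; apply: le_trans (ler_normB _ _) _.
rewrite normrZ ne mulr1; have := fb x; lra.
Qed.
Lemma x_le x : `|x| <= `|PX x| + `|f x|.
Proof.
have hx : x = PX x + f x *: e by rewrite /PX subrK.
rewrite {1}hx; apply: le_trans (ler_normD _ _) _.
by rewrite normrZ ne mulr1.
Qed.

Lemma iso_cp1 : isomorphic (cp1 fl fe) X.
Proof.
exists (fun z : cp1 fl fe => (z : X)), (fun z : X => (z : cp1 fl fe)).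
split => //.
- apply: (@lin_cont _ _ _ _ 1 _ ltr01) => // z; rewrite mul1r cp1E; exact: x_le.
- apply: (@lin_cont _ _ _ _ 3 _ _) => // z; rewrite cp1E.
  have := PX_le z; have := fb z; lra.
Qed.

Lemma iso_cp2 : isomorphic (cp2 fl fe) X.
Proof.
have s0 : 0 < Num.sqrt (2:R) by rewrite sqrtr_gt0.
exists (fun z : cp2 fl fe => (z : X)), (fun z : X => (z : cp2 fl fe)).
split => //.
- apply: (@lin_cont _ _ _ _ (Num.sqrt 2) _ s0) => // z; rewrite cp2E.
  apply: le_trans (x_le z) _; apply: sum_le_sqrt; exact: normr_ge0.
- apply: (@lin_cont _ _ _ _ 3 _ _) => // z; rewrite cp2E.
  apply: le_trans (sqrt_le_sum (normr_ge0 _) (normr_ge0 _)) _.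
  have := PX_le z; have := fb z; lra.
Qed.

End Copy.


Theorem mainTheorem3 (R : realType) :
  (forall X : completeNormedModType R,
      dim_gt1 X -> ((Num.sqrt 2)%:E <= BMdiam X)%E) /\
  (forall Y : completeNormedModType R, (exists y : Y, y != 0) ->
      (bmdist (ell1_2 R) (ell2_2 R) <= bmdist (oplus1 Y) (oplus2 Y))%E /\
      bmdist (ell1_2 R) (ell2_2 R) = (Num.sqrt 2)%:E).
Proof.
split; last first.
  move=> Y [y0 y00]; split; last exact: ell_eq.
  rewrite ell_eq; exact: oplus_lower y00.
move=> X [x [y ind]].
have x0 : x != 0.
  apply/eqP => hx; have := ind 1 0; rewrite hx scaler0 scale0r addr0.
  by move=> /(_ erefl) [/eqP]; rewrite oner_eq0.
have [f [fl fb fx]] := exists_fun x.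
have nx : 0 < `|x| by rewrite normr_gt0.
pose e := `|x|^-1 *: x.
have fe : f e = 1 by rewrite (linfZ fl) fx mulVf // gt_eqF.
have ne : `|e| = 1 by rewrite normrZ normrV ?unitfE ?gt_eqF // normr_id mulVf // gt_eqF.
have u0 : PX f e y != 0.
  apply/eqP => h; have := ind (- (f y * `|x|^-1)) 1.
  rewrite scale1r scaleNr -scalerA addrC.
  by move=> /(_ h) [_ /eqP]; rewrite oner_eq0.
apply: le_trans (cp_bound fl fe u0 (fPX fl fe y)) _.
apply: ereal_sup_ubound; exists (cp1 fl fe), (cp2 fl fe); split => //.
- exact: iso_cp1.
- exact: iso_cp2.
Qed.
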